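(* There is a constant $C$ such that for every $n\ge 1$ and every non-constant symmetric total Boolean function $f:\{0,1\}^n\rightarrow\{0,1\}$ (i.e. $f(x)$ depends only on the Hamming weight $|x|$), $WUQ(f)\ge \frac{1}{2}\log n-C$.
   Context: A quantum query algorithm alternates input-independent unitaries with the oracle $O_x:|i,b,z\rangle\mapsto|i,b\oplus x_i,z\rangle$ and measures an output bit. For an algorithm whose minimum over inputs of the probability of outputting $f(x)$ is $p>1/2$, its bias is $\beta=p-1/2$ and its weakly unbounded cost is (number of queries) $+\log(1/(2\beta))$; $WUQ(f)$ is the minimum weakly unbounded cost over quantum query algorithms. $\log$ is base 2. *)

(* Defs.v *)
From HB Require Import structures.
From mathcomp Require Import all_boot all_order all_algebra.
From mathcomp Require Import all_classical all_reals all_analysis.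
From mathcomp.real_closed Require Import complex.
Set Implicit Arguments. Unset Strict Implicit. Unset Printing Implicit Defensive.
Import Order.TTheory GRing.Theory Num.Theory.
Local Open Scope ring_scope.

Section QueryModel.
Variable R : realType.

Definition log2 (x : R) : R := ln x / ln 2.

(* Computational basis of the register |i, b, z> : query index i < n,
   answer bit b, workspace z < m. *)
Definition Idx (n m : nat) := ('I_n * bool * 'I_m)%type.

Definition state n m := Idx n m -> R[i].
Definition op n m := Idx n m -> Idx n m -> R[i].

Definition apply_op n m (U : op n m) (v : state n m) : state n m :=
  fun a => \sum_(c : Idx n m) U a c * v c.

Definition cconj (z : R[i]) : R[i] := @Complex R (@complex.Re R z) (- @complex.Im R z).

Definition unitary n m (U : op n m) : Prop :=
  forall a b : Idx n m, \sum_(c : Idx n m) cconj (U c a) * U c b = (a == b)%:R.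

Definition oracle n m (x : {ffun 'I_n -> bool}) (v : state n m) : state n m :=
  fun a => let: (i, b, z) := a in v (i, xorb b (x i), z).

Definition init_state n m : state n m :=
  fun a => let: (i, b, z) := a in
    if [&& (val i == 0)%N, ~~ b & (val z == 0)%N] then 1 else 0.

(* A quantum query algorithm on n input bits: workspace dimension ws,
   number of queries nq, unitaries U 0, ..., U nq, and the final measurement
   in the computational basis, outputting 1 iff the outcome lies in outS. *)
Record qalg (n : nat) := QAlg {
  ws : nat;
  nq : nat;
  U : nat -> op n ws;
  outS : {set Idx n ws}
}.
Arguments U [n] q k _ _.
Arguments outS [n] q.

Definition valid_qalg n (A : qalg n) : Prop :=
  (0 < ws A)%N /\ forall k, (k <= nq A)%N -> unitary (U A k).

Unset Implicit Arguments.
Fixpoint run n (A : qalg n) (x : {ffun 'I_n -> bool}) (k : nat) : state n (ws A) :=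
  match k with
  | 0 => @apply_op n (ws A) (U A 0) (@init_state n (ws A))
  | k'.+1 => @apply_op n (ws A) (U A k) (@oracle n (ws A) x (run n A x k'))
  end.
Set Implicit Arguments.
Arguments run [n] A x k.

Definition final_state n (A : qalg n) x := run A x (nq A).
Arguments final_state [n] A x _.

Definition normsq (z : R[i]) : R := @complex.Re R z ^+ 2 + @complex.Im R z ^+ 2.

Definition prob_out n (A : qalg n) (x : {ffun 'I_n -> bool}) (b : bool) : R :=
  \sum_(a : Idx n (ws A) | (a \in outS A) == b) normsq (final_state A x a).

Definition is_bias n (A : qalg n) (f : {ffun 'I_n -> bool} -> bool) (beta : R) : Prop :=
  (forall x, 1 / 2 + beta <= prob_out A x (f x)) /\
  (exists x, prob_out A x (f x) = 1 / 2 + beta).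

Definition wu_cost n (A : qalg n) (beta : R) : R :=
  (nq A)%:R + log2 (1 / (2 * beta)).

End QueryModel.

Definition hamming_weight n (x : {ffun 'I_n -> bool}) : nat := #|[pred i | x i]|.

Definition symmetric_fun n (f : {ffun 'I_n -> bool} -> bool) : Prop :=
  forall x y, hamming_weight x = hamming_weight y -> f x = f y.

(* Main.v *)
Require Import Defs.
From HB Require Import structures.
From mathcomp Require Import all_boot all_order all_algebra.
From mathcomp Require Import all_classical all_reals all_analysis.
From mathcomp.real_closed Require Import complex.
From mathcomp Require Import ring lra.
Import Order.TTheory GRing.Theory Num.Theory.
Local Open Scope ring_scope.
Set Implicit Arguments. Unset Strict Implicit. Unset Printing Implicit Defensive.
Section S.
Variable R : realType.
Lemma normsq_ge0 (w : R[i]) : 0 <= normsq w.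
Proof. by rewrite /normsq addr_ge0 ?sqr_ge0. Qed.

Definition dotc (p q : R[i]) : R := complex.Re p * complex.Re q + complex.Im p * complex.Im q.
Definition n2P (I : finType) (P : pred I) (v : I -> R[i]) : R := \sum_(i | P i) normsq (v i).

Lemma n2P_ge0 (I : finType) (P : pred I) v : 0 <= @n2P I P v.
Proof. by apply: sumr_ge0 => i _; apply: normsq_ge0. Qed.

Lemma dot_zero (p q : R[i]) : normsq p = 0 -> dotc p q = 0.
Proof.
case: p => a b; rewrite /normsq /dotc /= => h.
have ha : a = 0 by nra.
have hb : b = 0 by nra.
by rewrite ha hb !mul0r addr0.
Qed.

Lemma dot_amgm (s : R) (p q : R[i]) : 0 < s ->
  2 * dotc p q <= s * normsq p + normsq q / s.
Proof.
case: p => a b; case: q => c d; rewrite /normsq /dotc /= => hs.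
have hs' : s != 0 by rewrite gt_eqF.
have e : s * (a ^+ 2 + b ^+ 2) + (c ^+ 2 + d ^+ 2) / s - 2 * (a * c + b * d)
   = ((s * a - c) ^+ 2 + (s * b - d) ^+ 2) / s.
  by field.
rewrite -subr_ge0 e; apply: divr_ge0; last exact: ltW.
by rewrite addr_ge0 ?sqr_ge0.
Qed.

Lemma aux (x y : R) : 0 < x -> 0 < y -> y / x * x ^+ 2 + y ^+ 2 / (y / x) = 2 * (x * y).
Proof. by move=> hx hy; field; rewrite ?gt_eqF. Qed.

Lemma CS (I : finType) (P : pred I) (a b : I -> R[i]) :
  \sum_(i | P i) dotc (a i) (b i) <= Num.sqrt (n2P P a) * Num.sqrt (n2P P b).
Proof.
have hA := n2P_ge0 P a; have hB := n2P_ge0 P b.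
have [A0|A0] := eqVneq (n2P P a) 0.
  move/psumr_eq0P: A0 => /(_ (fun i _ => normsq_ge0 _)) A0.
  rewrite big1 ?mulr_ge0 ?sqrtr_ge0 // => i Pi.
  by apply: dot_zero; apply: A0.
have [B0|B0] := eqVneq (n2P P b) 0.
  move/psumr_eq0P: B0 => /(_ (fun i _ => normsq_ge0 _)) B0.
  rewrite big1 ?mulr_ge0 ?sqrtr_ge0 // => i Pi.
  rewrite /dotc mulrC [X in _ + X]mulrC -/(dotc (b i) (a i)).
  by apply: dot_zero; apply: B0.
have sA : 0 < Num.sqrt (n2P P a) by rewrite sqrtr_gt0 lt_def A0 hA.
have sB : 0 < Num.sqrt (n2P P b) by rewrite sqrtr_gt0 lt_def B0 hB.
set s := Num.sqrt (n2P P b) / Num.sqrt (n2P P a).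
have s0 : 0 < s by rewrite divr_gt0.
have h : 2 * \sum_(i | P i) dotc (a i) (b i) <= s * n2P P a + n2P P b / s.
  rewrite mulr_sumr /n2P mulr_sumr mulr_suml -big_split /=.
  by apply: ler_sum => i _; apply: dot_amgm.
have eA : n2P P a = Num.sqrt (n2P P a) ^+ 2 by rewrite sqr_sqrtr.
have eB : n2P P b = Num.sqrt (n2P P b) ^+ 2 by rewrite sqr_sqrtr.
have e : s * n2P P a + n2P P b / s = 2 * (Num.sqrt (n2P P a) * Num.sqrt (n2P P b)).
  by have := aux sA sB; rewrite -eA -eB.
move: h; rewrite e.
lra.
Qed.
Definition nrm (I : finType) (P : pred I) (v : I -> R[i]) : R := Num.sqrt (n2P P v).

Lemma nrm_ge0 (I : finType) (P : pred I) v : 0 <= nrm P v.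
Proof. exact: sqrtr_ge0. Qed.

Lemma normsqD (p q : R[i]) : normsq (p + q) = normsq p + normsq q + 2 * dotc p q.
Proof. case: p => a b; case: q => c d; rewrite /normsq /dotc /=; ring. Qed.

Lemma normsqB2 (p q : R[i]) : normsq (p - q) <= 2 * normsq p + 2 * normsq q.
Proof. case: p => a b; case: q => c d; rewrite /normsq /=; have := sqr_ge0 (a + c); have := sqr_ge0 (b + d); nra. Qed.

Lemma normsq_diff (p q : R[i]) : normsq p - normsq q = dotc (p - q) (p + q).
Proof. case: p => a b; case: q => c d; rewrite /normsq /dotc /=; ring. Qed.

Lemma sqrt_le_sq (x y : R) : 0 <= y -> x <= y ^+ 2 -> Num.sqrt x <= y.
Proof.
move=> hy hx.
have [x0|x0] := lerP 0 x.
  by rewrite -[leRHS](ger0_norm hy) -sqrtr_sqr ler_sqrt // (le_trans x0 hx).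
by rewrite ltr0_sqrtr.
Qed.

Lemma nrm_tri (I : finType) (P : pred I) (a b : I -> R[i]) :
  nrm P (fun i => a i + b i) <= nrm P a + nrm P b.
Proof.
rewrite /nrm; apply: sqrt_le_sq; first by rewrite addr_ge0 ?sqrtr_ge0.
have e : n2P P (fun i => a i + b i) = n2P P a + n2P P b + 2 * \sum_(i | P i) dotc (a i) (b i).
  by rewrite /n2P mulr_sumr -!big_split /=; apply: eq_bigr => i _; rewrite normsqD.
rewrite e sqrrD !sqr_sqrtr ?n2P_ge0 //.
have := CS P a b; lra.
Qed.

Lemma n2P_le (I : finType) (P : pred I) v : n2P P v <= n2P predT v.
Proof.
rewrite /n2P [X in _ <= X](bigID P) /= lerDl.
by apply: sumr_ge0 => i _; apply: normsq_ge0.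
Qed.

Lemma nrm_le (I : finType) (P : pred I) v : nrm P v <= nrm predT v.
Proof. by rewrite /nrm ler_sqrt ?n2P_le ?n2P_ge0. Qed.

Lemma prob_diff (I : finType) (P : pred I) (p q : I -> R[i]) :
  n2P predT p = 1 -> n2P predT q = 1 ->
  \sum_(i | P i) normsq (p i) - \sum_(i | P i) normsq (q i) <= 2 * nrm predT (fun i => p i - q i).
Proof.
move=> hp hq.
rewrite -sumrB.
under eq_bigr => i _ do rewrite normsq_diff.
apply: (le_trans (CS _ _ _)).
rewrite -/(nrm P _) -/(nrm P _) mulrC.
apply: ler_pM; rewrite ?nrm_ge0 //.
  apply: (le_trans (nrm_tri _ _ _)).
  have h1 := nrm_le P p; have h2 := nrm_le P q.
  rewrite /nrm hp hq sqrtr1 in h1 h2; rewrite /nrm; lra.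
exact: nrm_le.
Qed.
Lemma cconjE (z : R[i]) : cconj z = conjc z.
Proof. by case: z. Qed.
Lemma nsqC (w : R[i]) : ((normsq w)%:C)%C = conjc w * w.
Proof. case: w => a b; rewrite /normsq /=; simpc. apply/eqP; rewrite eq_complex /=. apply/andP; split; apply/eqP; ring. Qed.

Lemma n2PC (I : finType) (v : I -> R[i]) : ((n2P predT v)%:C)%C = \sum_i conjc (v i) * v i.
Proof. rewrite /n2P rmorph_sum; apply: eq_bigr => i _; exact: nsqC. Qed.

Variables (n m : nat).

Lemma unitary_norm (U : op R n m) (v : state R n m) :
  unitary U -> n2P predT (apply_op U v) = n2P predT v.
Proof.
move=> hU; apply: complexI; rewrite !n2PC /apply_op.
transitivity (\sum_a \sum_c \sum_c' (conjc (v c) * v c') * (conjc (U a c) * U a c')).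
  apply: eq_bigr => a _; rewrite rmorph_sum mulr_suml; apply: eq_bigr => c _.
  rewrite mulr_sumr; apply: eq_bigr => c' _; rewrite rmorphM; ring.
rewrite exchange_big; apply: eq_bigr => c _.
rewrite exchange_big /=.
rewrite (bigD1 c) //= -mulr_sumr.
have -> : \sum_a conjc (U a c) * U a c = 1.
  by have := hU c c; rewrite eqxx /= mulr1n => <-; apply: eq_bigr => a _; rewrite cconjE.
rewrite mulr1 big1 ?addr0 // => c' hc'.
rewrite -mulr_sumr.
have -> : \sum_a conjc (U a c) * U a c' = 0.
  transitivity (\sum_a cconj (U a c) * U a c'); first by apply: eq_bigr => a _; rewrite cconjE.
  by rewrite hU eq_sym (negbTE hc').
by rewrite mulr0.
Qed.
Definition phi (x : {ffun 'I_n -> bool}) (a : Idx n m) : Idx n m :=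
  let: (i, b, z) := a in (i, xorb b (x i), z).

Lemma phiK x : involutive (phi x).
Proof. by case=> [[i b] z] /=; case: b; case: (x i). Qed.

Lemma phi1 x a : (phi x a).1.1 = a.1.1.
Proof. by case: a => [[i b] z]. Qed.

Lemma oracleE x (v : state R n m) a : oracle x v a = v (phi x a).
Proof. by case: a => [[i b] z]. Qed.

Lemma n2P_phi (P : pred (Idx n m)) x (v : state R n m) :
  (forall a, P (phi x a) = P a) -> n2P P (fun a => v (phi x a)) = n2P P v.
Proof.
move=> hP; rewrite /n2P [RHS](reindex_inj (inv_inj (phiK x))) /=.
by apply: eq_bigl => a; rewrite hP.
Qed.

Lemma oracle_norm x (v : state R n m) : n2P predT (oracle x v) = n2P predT v.
Proof.
rewrite -(@n2P_phi predT x v) //; apply: eq_bigr => a _; by rewrite oracleE.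
Qed.

Lemma init_norm : (0 < n)%N -> (0 < m)%N -> n2P predT (@init_state R n m) = 1.
Proof.
move=> hn hm.
pose a0 : Idx n m := (Ordinal hn, false, Ordinal hm).
rewrite /n2P (bigD1 a0) //= big1 ?addr0.
  by rewrite /normsq /= expr1n expr0n /= addr0.
case=> [[i b] z] /= ha.
case: ifP => h; last by rewrite /normsq /= expr0n /= addr0.
exfalso; move/negP: ha; apply.
case/and3P: h => /eqP hi hb /eqP hz.
apply/eqP; rewrite /a0; congr (_, _, _); try exact: val_inj.
by move: hb; case: b.
Qed.

Lemma oracle_diff (x y : {ffun 'I_n -> bool}) (i0 : 'I_n) (v : state R n m) :
  y i0 = ~~ x i0 -> (forall j, j != i0 -> y j = x j) ->
  nrm predT (fun a => oracle x v a - oracle y v a) <= 2 * nrm (fun a => a.1.1 == i0) v.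
Proof.
move=> hi hj; rewrite /nrm; apply: sqrt_le_sq.
  by rewrite mulr_ge0 ?sqrtr_ge0.
rewrite exprMn sqr_sqrtr ?n2P_ge0 //.
rewrite /n2P (bigID (fun a : Idx n m => a.1.1 == i0)) /= [X in _ + X]big1 ?addr0; last first.
  case=> [[i b] z] /= hne.
  by rewrite hj // subrr /normsq /= expr0n /= addr0.
apply: (le_trans (ler_sum _ (fun a _ => normsqB2 _ _))).
rewrite big_split /= -!mulr_sumr.
have h1 : \sum_(a | a.1.1 == i0) normsq (oracle x v a) = n2P (fun a : Idx n m => a.1.1 == i0) v.
  rewrite -(@n2P_phi _ x v) => [|a]; last by rewrite phi1.
  by apply: eq_bigr => a _; rewrite oracleE.
have h2 : \sum_(a | a.1.1 == i0) normsq (oracle y v a) = n2P (fun a : Idx n m => a.1.1 == i0) v.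
  rewrite -(@n2P_phi _ y v) => [|a]; last by rewrite phi1.
  by apply: eq_bigr => a _; rewrite oracleE.
rewrite h1 h2.
rewrite expr2 -mulrDl; apply: ler_wpM2r => //. exact: n2P_ge0. by rewrite -natrD -natrM ler_nat.
Qed.
Lemma apply_opB (U : op R n m) (v w : state R n m) a :
  apply_op U v a - apply_op U w a = apply_op U (fun c => v c - w c) a.
Proof. by rewrite /apply_op -sumrB; apply: eq_bigr => c _; rewrite mulrBr. Qed.

Lemma nrm_unitary (U : op R n m) (v : state R n m) :
  unitary U -> nrm predT (apply_op U v) = nrm predT v.
Proof. by move=> hU; rewrite /nrm unitary_norm. Qed.

End S.
Section Alg.
Variable R : realType.
Variable n : nat.
Variable A : qalg R n.

Lemma run_norm x t : (0 < n)%N -> valid_qalg A -> (t <= nq A)%N ->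
  n2P predT (run R n A x t) = 1.
Proof.
move=> hn [hw hU]; elim: t => [|t IH] ht /=.
  by rewrite unitary_norm ?init_norm //; apply: hU.
rewrite unitary_norm; last by apply: hU.
by rewrite oracle_norm IH // ltnW.
Qed.

Lemma hybrid (x y : {ffun 'I_n -> bool}) (i0 : 'I_n) t :
  valid_qalg A -> (t <= nq A)%N ->
  x i0 = ~~ y i0 -> (forall j, j != i0 -> x j = y j) ->
  nrm predT (fun a => run R n A x t a - run R n A y t a) <=
  2 * \sum_(s < t) nrm (fun a : Idx n (ws A) => a.1.1 == i0) (run R n A y s).
Proof.
move=> [hw hU]; elim: t => [|t IH] ht hi hj.
  rewrite big_ord0 mulr0 /nrm /n2P big1 ?sqrtr0 // => a _.
  by rewrite subrr /normsq /= expr0n /= addr0.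
rewrite big_ord_recr /= mulrDr.
have IH' := IH (ltnW ht) hi hj.
set vx := run R n A x t; set vy := run R n A y t.
have e : (fun a => run R n A x t.+1 a - run R n A y t.+1 a) =
   apply_op (@U R n A t.+1) (fun c => oracle x vx c - oracle y vy c).
  by apply: funext => a /=; rewrite apply_opB.
rewrite e nrm_unitary; last by apply: hU.
have e2 : (fun c => oracle x vx c - oracle y vy c) =
   (fun c => oracle x (fun d => vx d - vy d) c + (oracle x vy c - oracle y vy c)).
  by apply: funext => c; rewrite !oracleE; ring.
rewrite e2; apply: (le_trans (nrm_tri _ _ _)).
apply: lerD.
  have -> : nrm predT (oracle x (fun d => vx d - vy d)) = nrm predT (fun d => vx d - vy d).
    by rewrite /nrm oracle_norm.
  exact: IH'.
apply: oracle_diff; first by rewrite hi negbK.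
by move=> j hj'; rewrite hj.
Qed.
Lemma prob_total y b : (0 < n)%N -> valid_qalg A ->
  prob_out A y b + prob_out A y (~~ b) = 1.
Proof.
move=> hn hv; rewrite /prob_out /final_state -(run_norm y hn hv (leqnn _)) /n2P.
rewrite [in RHS](bigID (fun a => (a \in outS A) == b)) /=; congr (_ + _).
by apply: eq_bigl => a; case: (a \in outS A); case: b.
Qed.

Lemma beta_le (f : {ffun 'I_n -> bool} -> bool) beta x y :
  (0 < n)%N -> valid_qalg A -> is_bias A f beta -> f y = ~~ f x ->
  beta <= nrm predT (fun a => run R n A x (nq A) a - run R n A y (nq A) a).
Proof.
move=> hn hv [hb _] hf.
have h1 := hb x; have h2 := hb y; have h3 := prob_total y (f x) hn hv.
rewrite hf in h2.
have := @prob_diff R _ (fun a => (a \in outS A) == f x) _ _ (run_norm x hn hv (leqnn _)) (run_norm y hn hv (leqnn _)).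
rewrite /prob_out /final_state in h1 h2 h3 *.
lra.
Qed.
End Alg.

Section Sum.
Variable R : realType.

Lemma sum_nrm_le n m (J : pred 'I_n) (v : state R n m) : n2P predT v = 1 ->
  \sum_(i | J i) nrm (fun a : Idx n m => a.1.1 == i) v <= Num.sqrt (#|J|%:R).
Proof.
move=> hv.
have := @CS R _ J (fun i => ((nrm (fun a : Idx n m => a.1.1 == i) v)%:C)%C) (fun _ => 1).
have e1 : \sum_(i | J i) dotc ((nrm (fun a : Idx n m => a.1.1 == i) v)%:C)%C 1 =
          \sum_(i | J i) nrm (fun a : Idx n m => a.1.1 == i) v.
  by apply: eq_bigr => i _; rewrite /dotc /= mulr1 mul0r addr0.
have e2 : n2P J (fun _ => 1 : R[i]) = #|J|%:R.
  rewrite /n2P (eq_bigr (fun _ => 1)) ?sumr_const // => i _.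
  by rewrite /normsq /= expr1n expr0n /= addr0.
rewrite e1 e2 => h; apply: (le_trans h).
rewrite -[leRHS]mul1r ler_wpM2r ?sqrtr_ge0 // -sqrtr1 ler_sqrt ?ler01 //.
rewrite -hv /n2P.
have e3 : \sum_(i | J i) normsq ((nrm (fun a : Idx n m => a.1.1 == i) v)%:C)%C =
   \sum_(i | J i) \sum_(a | a.1.1 == i) normsq (v a).
  apply: eq_bigr => i _; rewrite /normsq /= expr0n /= addr0 /nrm sqr_sqrtr //.
  exact: n2P_ge0.
rewrite e3.
have e4 : \sum_(i | J i) \sum_(a | a.1.1 == i) normsq (v a) =
   \sum_(i | J i) \sum_(a | J a.1.1 && (a.1.1 == i)) normsq (v a).
  apply: eq_bigr => i Ji; apply: eq_bigl => a.
  by case: eqP => [->|]; rewrite ?Ji ?andbF.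
rewrite e4 -(@partition_big _ _ _ _ _ _ (fun a : Idx n m => J a.1.1) (fun a => a.1.1) J) //=.
exact: (@n2P_le R _ (fun a : Idx n m => J a.1.1) v).
Qed.

Definition flip n (y : {ffun 'I_n -> bool}) (i : 'I_n) : {ffun 'I_n -> bool} :=
  [ffun j => if j == i then ~~ y j else y j].

Lemma key n (A : qalg R n) (f : {ffun 'I_n -> bool} -> bool) beta y (J : pred 'I_n) :
  (0 < n)%N -> valid_qalg A -> is_bias A f beta ->
  (forall i, J i -> f (flip y i) = ~~ f y) ->
  beta * #|J|%:R <= 2 * (nq A)%:R * Num.sqrt (#|J|%:R).
Proof.
move=> hn hv hb hJ.
have step : forall i, J i -> beta <=
   2 * \sum_(s < nq A) nrm (fun a : Idx n (ws A) => a.1.1 == i) (run R n A y s).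
  move=> i Ji; apply: le_trans (@beta_le R n A f beta (flip y i) y hn hv hb _) _.
    by rewrite hJ // negbK.
  apply: hybrid => //; first by rewrite /flip ffunE eqxx.
  by move=> j hj; rewrite /flip ffunE (negbTE hj).
have h1 : beta * #|J|%:R <= \sum_(i | J i)
     2 * \sum_(s < nq A) nrm (fun a : Idx n (ws A) => a.1.1 == i) (run R n A y s).
  rewrite mulr_natr -sumr_const.
  have -> : \sum_(i in J) beta = \sum_(i | J i) beta by [].
  exact: ler_sum.
apply: (le_trans h1).
rewrite -mulr_sumr -mulrA ler_wpM2l // exchange_big /=.
apply: le_trans (ler_sum _ (fun (s : 'I_(nq A)) _ => sum_nrm_le J (run_norm y hn hv (ltnW (ltn_ord s))))) _.
by rewrite sumr_const card_ord mulr_natl.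
Qed.

Lemma final_real (nn T : nat) (beta : R) : 0 < beta -> (1 <= nn)%N ->
  beta ^+ 2 * nn%:R <= 8 * (2 ^+ T) ^+ 2 ->
  log2 (nn%:R : R) / 2 - 3 <= T%:R + log2 (1 / (2 * beta)).
Proof.
move=> hb hn h.
have L2 : 0 < ln (2 : R) by apply: ln_gt0; rewrite ltr1n.
have nn0 : 0 < (nn%:R : R) by rewrite ltr0n.
have p1 : 0 < beta ^+ 2 * nn%:R by rewrite mulr_gt0 ?exprn_gt0.
have p2 : 0 < (8 : R) * (2 ^+ T) ^+ 2 by rewrite mulr_gt0 ?exprn_gt0 ?ltr0n.
move: h; rewrite -ler_ln ?posrE //.
rewrite lnM ?posrE ?exprn_gt0 // lnXn //.
rewrite lnM ?posrE ?exprn_gt0 ?ltr0n // lnXn ?exprn_gt0 // lnXn //.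
have -> : (8 : R) = 2 ^+ 3 by rewrite -natrX.
rewrite lnXn ?ltr0n // => h.
have e : ln (1 / (2 * beta)) = - (ln 2 + ln beta).
  rewrite div1r lnV ?posrE ?mulr_gt0 ?ltr0n // lnM ?posrE ?ltr0n //.
rewrite /log2 e.
rewrite -subr_ge0.
have -> : T%:R + - (ln 2 + ln beta) / ln 2 - (ln nn%:R / ln 2 / 2 - 3)
   = (2 * T%:R * ln 2 - 2 * ln 2 - 2 * ln beta - ln nn%:R + 6 * ln 2) / (2 * ln (2:R)).
  by field; rewrite gt_eqF.
apply: divr_ge0; last by rewrite mulr_ge0 ?ler0n ?ltW.
move: h; rewrite -(mulr_natr (ln 2) T) -(mulr_natl (ln beta) 2) -(mulr_natl (ln 2) 3) -(mulr_natl (ln 2 * T%:R) 2). lra.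
Qed.
Lemma combine (beta : R) (J nn T : nat) : 0 < beta -> (0 < J)%N -> (nn <= J.*2)%N ->
  beta * J%:R <= 2 * T%:R * Num.sqrt (J%:R) -> beta ^+ 2 * nn%:R <= 8 * (2 ^+ T) ^+ 2.
Proof.
move=> hb hJ hn h.
set s := Num.sqrt (J%:R : R).
have s0 : 0 < s by rewrite sqrtr_gt0 ltr0n.
have eJ : (J%:R : R) = s ^+ 2 by rewrite sqr_sqrtr ?ler0n.
have h1 : beta * s <= 2 * T%:R.
  rewrite -(ler_pM2r s0) -mulrA -expr2 -eJ; exact: h.
have h2 : beta ^+ 2 * J%:R <= 4 * T%:R ^+ 2.
  rewrite eJ -exprMn (_ : 4 * T%:R ^+ 2 = (2 * T%:R) ^+ 2); last by ring.
  have bs : 0 <= beta * s by rewrite mulr_ge0 ?ltW.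
  by rewrite !expr2; apply: ler_pM.
have h3 : (T%:R : R) <= 2 ^+ T.
  by rewrite -natrX ler_nat ltnW // ltn_expl.
have h4 : (nn%:R : R) <= 2 * J%:R by rewrite -natrM ler_nat mul2n.
have h5 : (T%:R : R) ^+ 2 <= (2 ^+ T) ^+ 2 by rewrite ler_pXn2r ?nnegrE ?ler0n ?exprn_ge0.
have hb2 : 0 <= beta ^+ 2 by rewrite sqr_ge0.
have h6 : beta ^+ 2 * nn%:R <= beta ^+ 2 * (2 * J%:R) by rewrite ler_wpM2l.
lra.
Qed.
End Sum.

Section Comb.
Variable n : nat.
Implicit Types (y : {ffun 'I_n -> bool}).

Lemma flip_i y i : flip y i i = ~~ y i.
Proof. by rewrite /flip ffunE eqxx. Qed.

Lemma flipK y i : flip (flip y i) i = y.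
Proof. apply/ffunP => j; rewrite /flip !ffunE; case: eqP => // ->; by rewrite negbK. Qed.

Lemma flip_up y i : y i = false -> hamming_weight (flip y i) = (hamming_weight y).+1.
Proof.
move=> hy; rewrite /hamming_weight.
have -> : #|[pred j | flip y i j]| = #|[predU1 i & [pred j | y j]]|.
  apply: eq_card => j; rewrite !inE /flip ffunE; case: eqP => [->|] //=; by rewrite hy.
by rewrite cardU1 inE hy.
Qed.

Lemma flip_down y i : y i = true -> (hamming_weight (flip y i)).+1 = hamming_weight y.
Proof.
move=> hy; have := @flip_up (flip y i) i; rewrite flipK flip_i hy => -> //.
Qed.

Definition w k : {ffun 'I_n -> bool} := [ffun j : 'I_n => (j < k)%N].

Lemma w_weight k : (k <= n)%N -> hamming_weight (w k) = k.
Proof.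
elim: k => [|k IH] hk.
  by apply: eq_card0 => j; rewrite inE /w ffunE.
have -> : w k.+1 = flip (w k) (Ordinal hk).
  apply/ffunP => j; rewrite /flip /w !ffunE ltnS leq_eqVlt.
  case: (eqVneq j (Ordinal hk)) => [->|hne] /=; first by rewrite eqxx ltnn.
  have hne' : (val j != k) by apply: contra hne => /eqP h; apply/eqP/val_inj.
  by rewrite (negbTE hne').
rewrite flip_up; last by rewrite /w ffunE ltnn.
by rewrite IH // ltnW.
Qed.

Lemma weight_le y : (hamming_weight y <= n)%N.
Proof. by have := max_card [pred i | y i]; rewrite card_ord. Qed.
End Comb.

Unset Implicit Arguments.
From mathcomp Require Import zify.

Theorem mainTheorem11 (R : realType) :
  exists C : R,
    forall (n : nat) (f : {ffun 'I_n -> bool} -> bool),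
      (1 <= n)%N ->
      symmetric_fun f ->
      (exists x y, f x != f y) ->
      forall (A : qalg R n) (beta : R),
        valid_qalg A -> 0 < beta -> is_bias A f beta ->
        log2 (n%:R : R) / 2 - C <= wu_cost A beta.
Proof.
exists 3 => n f hn hsym [x0 [y0 hne]] A beta hv hb0 hbias.
pose F k := f (w n k).
have hF : forall x, f x = F (hamming_weight x).
  by move=> x; apply: hsym; rewrite w_weight ?weight_le.
have [k hk hFk] : exists2 k, (k < n)%N & F k != F k.+1.
  case: (boolP [exists k : 'I_n, F k != F k.+1]) => [/existsP [k hk]|/existsPn hall].
    by exists k.
  exfalso.
  have hc : forall k, (k <= n)%N -> F k = F 0.
    elim=> [//|j IH] hj; rewrite -IH; last exact: ltnW.
    by have := hall (Ordinal hj); rewrite negbK => /eqP.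
  by move: hne; rewrite (hF x0) (hF y0) (hc _ (weight_le x0)) (hc _ (weight_le y0)) eqxx.
have hFn : F k.+1 = ~~ F k by move: hFk; case: (F k); case: (F k.+1).
rewrite /wu_cost.
have fin : forall (y : {ffun 'I_n -> bool}) (J : pred 'I_n),
    (forall i, J i -> f (flip y i) = ~~ f y) -> (0 < #|J|)%N -> (n <= (#|J|).*2)%N ->
    log2 (n%:R : R) / 2 - 3 <= (nq A)%:R + log2 (1 / (2 * beta)).
  move=> y J hJ hJ0 hJn.
  apply: final_real => //.
  apply: (combine hb0 hJ0 hJn).
  exact: (key (A := A) hn hv hbias hJ).
have [hsmall|hbig] := leqP (k.*2.+1) n.
  pose y := w n k.
  have hyk : hamming_weight y = k by rewrite w_weight // ltnW.
  have hcard : (#|[pred j | ~~ y j]| + k = n)%N.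
    rewrite -hyk /hamming_weight addnC.
    rewrite -[RHS](card_ord n) -(cardC [pred j | y j]).
    by congr (_ + _); apply: eq_card => j; rewrite !inE.
  apply: (fin y [pred j | ~~ y j]).
  - move=> i /negbTE hi; rewrite (hF (flip y i)) (hF y) flip_up // hyk; by rewrite hFn.
  - move: hcard hsmall; set c := #|[pred j | ~~ y j]|; lia.
  - move: hcard hsmall; set c := #|[pred j | ~~ y j]|; lia.
pose y := w n k.+1.
have hyk : hamming_weight y = k.+1 by rewrite w_weight.
apply: (fin y [pred j | y j]).
- move=> i hi; rewrite (hF (flip y i)) (hF y).
  have := flip_down hi; rewrite hyk => -[->].
  by rewrite hFn negbK.
- by have := hyk; rewrite /hamming_weight => ->.
- have := hyk; rewrite /hamming_weight => ->; lia.
Qed.
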